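(* Let $\mathrm G^S=(\mathrm V,\mathrm E^S)$ be a fixed bidirectional connected graph with constant weights $a_{ij}^S=a_{ji}^S>0$, and suppose $\mathrm{rank}(\mathbf H)=m$. For $K>0$ let $\mathcal Z_K=\{\mathbf x\in(\mathbb R^m)^N:\nabla\mathcal D_K(\mathbf x)=0\}$. Then (i) $\mathcal Z_K$ is a singleton for every $K>0$ (so every trajectory of the ''consensus + projection'' flow on $\mathrm G^S$ converges to a single point); and (ii) for every $\kappa_0>0$ the set $\bigcup_{K>\kappa_0}\mathcal Z_K$ is bounded.
   Context: $\mathbf H\in\mathbb R^{N\times m}$ has rows $\mathbf h_1^T,\dots,\mathbf h_N^T$ with $\|\mathbf h_i\|=1$, $\mathbf z=(z_1,\dots,z_N)^T$; $\mathcal A_i=\{\mathbf y\in\mathbb R^m:\mathbf h_i^T\mathbf y=z_i\}$, $\|\mathbf v\|_{\mathcal A_i}$ the Euclidean distance from $\mathbf v$ to $\mathcal A_i$. $\mathrm V=\{1,\dots,N\}$; bidirectional means $(i,j)\in\mathrm E^S\iff(j,i)\in\mathrm E^S$; $\mathrm N_i=\{j:(j,i)\in\mathrm E^S\}$. $\mathcal D_K(\mathbf x)=\frac12\sum_{i=1}^N\|\mathbf x_i\|_{\mathcal A_i}^2+\frac K2\sum_{\{i,j\}\in\mathrm E^S}a_{ij}^S\|\mathbf x_j-\mathbf x_i\|^2$, the second sum over unordered edges; the ''consensus + projection'' flow $\dot{\mathbf x}_i=K\sum_{j\in\mathrm N_i}a_{ij}^S(\mathbf x_j-\mathbf x_i)+\mathcal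 P_{\mathcal A_i}(\mathbf x_i)-\mathbf x_i$ equals $\dot{\mathbf x}=-\nabla\mathcal D_K(\mathbf x)$, where $\mathcal P_{\mathcal A_i}(\mathbf y)=(I-\mathbf h_i\mathbf h_i^T)\mathbf y+z_i\mathbf h_i$. *)

(* Defs.v *)
From Stdlib Require Import Reals Lra Lia ClassicalEpsilon.
Open Scope R_scope.

Fixpoint sumR (n : nat) (f : nat -> R) : R :=
  match n with O => 0 | S p => sumR p f + f p end.

(* Vectors of R^m are represented as functions nat -> R (entries k < m used). *)
Definition dotp (m : nat) (u v : nat -> R) : R := sumR m (fun k => u k * v k).
Definition vnorm (m : nat) (u : nat -> R) : R := sqrt (dotp m u u).

Definition hyperplane (m : nat) (hi : nat -> R) (zi : R) (y : nat -> R) : Prop :=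
  dotp m hi y = zi.

Definition is_glb (S : R -> Prop) (d : R) : Prop :=
  (forall r, S r -> d <= r) /\ (forall b, (forall r, S r -> b <= r) -> b <= d).

Definition dist_hyp (m : nat) (hi : nat -> R) (zi : R) (v : nat -> R) : R :=
  epsilon (inhabits 0)
    (is_glb (fun r => exists y, hyperplane m hi zi y /\
                          r = vnorm m (fun k => v k - y k))).

(* Full column rank: rank(H) = m for the N x m matrix with rows h_i,
   i.e. the m columns are linearly independent (H y = 0 -> y = 0). *)
Definition rank_full_col (N m : nat) (h : nat -> nat -> R) : Prop :=
  forall y : nat -> R,
    (forall i, (i < N)%nat -> dotp m (h i) y = 0) ->
    forall k, (k < m)%nat -> y k = 0.

(* Graph on V = {0..N-1} given by weights a: (i,j) is an edge iff a i j > 0. *)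
Inductive reach (N : nat) (a : nat -> nat -> R) : nat -> nat -> Prop :=
| reach_refl : forall i, reach N a i i
| reach_step : forall i j k, (j < N)%nat -> a i j > 0 -> reach N a j k ->
    reach N a i k.

Definition connected (N : nat) (a : nat -> nat -> R) : Prop :=
  forall i j, (i < N)%nat -> (j < N)%nat -> reach N a i j.

(* Configuration x : (R^m)^N, x i k = k-th coordinate of x_i. *)
Definition DK (N m : nat) (h : nat -> nat -> R) (z : nat -> R)
  (a : nat -> nat -> R) (K : R) (x : nat -> nat -> R) : R :=
  / 2 * sumR N (fun i => (dist_hyp m (h i) (z i) (x i)) ^ 2)
  + K / 2 * sumR N (fun i => sumR N (fun j =>
       if (i <? j)%nat
       then a i j * (vnorm m (fun k => x j k - x i k)) ^ 2 else 0)).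

(* grad D_K(x) = 0 : every directional derivative of D_K at x vanishes. *)
Definition grad_zero (N m : nat) (h : nat -> nat -> R) (z : nat -> R)
  (a : nat -> nat -> R) (K : R) (x : nat -> nat -> R) : Prop :=
  forall v : nat -> nat -> R,
    derivable_pt_lim
      (fun t => DK N m h z a K (fun i k => x i k + t * v i k)) 0 0.

(* Main.v *)
Require Import Defs.
From Stdlib Require Import Reals Lra Lia ClassicalEpsilon FunctionalExtensionality.
From mathcomp Require all_boot all_algebra Rstruct.
Open Scope R_scope.

Lemma sumR_ext n f g : (forall i, (i < n)%nat -> f i = g i) -> sumR n f = sumR n g.
Proof. induction n; simpl; intros H; auto. rewrite IHn by (intros; apply H; lia). rewrite H by lia. auto. Qed.

Lemma sumR_plus n f g : sumR n (fun i => f i + g i) = sumR n f + sumR n g.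
Proof. induction n; simpl; [ring|rewrite IHn; ring]. Qed.

Lemma sumR_scal n c f : sumR n (fun i => c * f i) = c * sumR n f.
Proof. induction n; simpl; [ring|rewrite IHn; ring]. Qed.

Lemma sumR_minus n f g : sumR n (fun i => f i - g i) = sumR n f - sumR n g.
Proof. induction n; simpl; [ring|rewrite IHn; ring]. Qed.

Lemma sumR_0 n : sumR n (fun _ => 0) = 0.
Proof. induction n; simpl; [ring|rewrite IHn; ring]. Qed.

Lemma sumR_nonneg n f : (forall i, (i < n)%nat -> 0 <= f i) -> 0 <= sumR n f.
Proof. induction n; simpl; intros H; [lra|]. pose proof (H n ltac:(lia)). pose proof (IHn ltac:(intros; apply H; lia)). lra. Qed.

Lemma sumR_le n f g : (forall i, (i < n)%nat -> f i <= g i) -> sumR n f <= sumR n g.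
Proof. induction n; simpl; intros H; [lra|]. pose proof (H n ltac:(lia)). pose proof (IHn ltac:(intros; apply H; lia)). lra. Qed.

Lemma sumR_term_le n f i : (forall i, (i < n)%nat -> 0 <= f i) -> (i < n)%nat -> f i <= sumR n f.
Proof.
induction n; simpl; intros H Hi; [lia|].
destruct (Nat.eq_dec i n) as [->|Hne].
- pose proof (sumR_nonneg n f ltac:(intros; apply H; lia)). lra.
- pose proof (IHn ltac:(intros; apply H; lia) ltac:(lia)). pose proof (H n ltac:(lia)). lra.
Qed.

Lemma sumR_zero_each n f : (forall i, (i < n)%nat -> 0 <= f i) -> sumR n f = 0 ->
  forall i, (i < n)%nat -> f i = 0.
Proof.
intros H0 Hs i Hi. pose proof (sumR_term_le n f i H0 Hi). pose proof (H0 i Hi). lra.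
Qed.

Lemma sumR_swap n p f : sumR n (fun i => sumR p (fun j => f i j)) = sumR p (fun j => sumR n (fun i => f i j)).
Proof.
induction n; simpl.
- rewrite sumR_0. auto.
- rewrite IHn. rewrite <- sumR_plus. auto.
Qed.

Lemma sumR_abs n f : Rabs (sumR n f) <= sumR n (fun i => Rabs (f i)).
Proof.
induction n; simpl. rewrite Rabs_R0; lra.
eapply Rle_trans. apply Rabs_triang. lra.
Qed.

Lemma sumR_delta n k f : (k < n)%nat -> sumR n (fun l => if Nat.eqb l k then f l else 0) = f k.
Proof.
induction n; simpl; intros Hk; [lia|].
destruct (Nat.eq_dec k n) as [->|Hne].
- rewrite Nat.eqb_refl. rewrite (sumR_ext n _ (fun _ => 0)). rewrite sumR_0. ring.
  intros i Hi. destruct (Nat.eqb_spec i n); [lia|auto].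
- destruct (Nat.eqb_spec n k); [lia|]. rewrite IHn by lia. ring.
Qed.

Lemma sumR_app a b f : sumR (a + b) f = sumR a f + sumR b (fun l => f (a + l)%nat).
Proof.
induction b; simpl. rewrite Nat.add_0_r; ring.
rewrite Nat.add_succ_r. simpl. rewrite IHb. ring.
Qed.

Lemma sumR_mul N m f : sumR (N * m) f = sumR N (fun j => sumR m (fun l => f (j * m + l)%nat)).
Proof.
induction N; simpl. auto.
rewrite Nat.add_comm, sumR_app, IHN. auto.
Qed.

Lemma sumR_quad n t f p q r : (forall i, (i < n)%nat -> f i = p i + t * q i + t ^ 2 * r i) ->
  sumR n f = sumR n p + t * sumR n q + t ^ 2 * sumR n r.
Proof.
intros H. rewrite (sumR_ext n f (fun i => p i + t * q i + t ^ 2 * r i)) by auto.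
rewrite !sumR_plus, !sumR_scal. ring.
Qed.

Lemma dotp_nonneg m u : 0 <= dotp m u u.
Proof. unfold dotp. apply sumR_nonneg. intros. apply Rle_0_sqr. Qed.

Lemma max_exists (n : nat) (Q : nat -> R -> Prop) :
  (forall i L L', Q i L -> L <= L' -> Q i L') ->
  (forall i, (i < n)%nat -> exists L, Q i L) -> exists L, forall i, (i < n)%nat -> Q i L.
Proof.
intros Hm. induction n; intros H.
- exists 0. intros; lia.
- destruct IHn as [L1 H1]. intros; apply H; lia.
  destruct (H n ltac:(lia)) as [L2 H2].
  exists (Rmax L1 L2). intros i Hi. destruct (Nat.eq_dec i n) as [->|Hne].
  + eapply Hm; [eauto| apply Rmax_r].
  + eapply Hm; [apply H1; lia| apply Rmax_l].
Qed.

Lemma vnorm_sq m u : vnorm m u ^ 2 = dotp m u u.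
Proof. unfold vnorm. apply pow2_sqrt. apply dotp_nonneg. Qed.

Lemma glb_unique S d1 d2 : is_glb S d1 -> is_glb S d2 -> d1 = d2.
Proof.
intros [H1 H1'] [H2 H2']. apply Rle_antisym; [apply H2'|apply H1']; auto.
Qed.

Lemma dist_hyp_eq m hi zi v : vnorm m hi = 1 ->
  dist_hyp m hi zi v = Rabs (dotp m hi v - zi).
Proof.
intros Hn.
assert (Hhh : dotp m hi hi = 1) by (rewrite <- vnorm_sq, Hn; ring).
set (S := fun r => exists y, hyperplane m hi zi y /\ r = vnorm m (fun k => v k - y k)).
assert (Hg : is_glb S (Rabs (dotp m hi v - zi))).
{ split.
  - intros r [y [Hy ->]]. unfold hyperplane in Hy.
    set (w := fun k => v k - y k).
    assert (Hw : dotp m hi w = dotp m hi v - zi).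
    { unfold w, dotp. rewrite (sumR_ext m _ (fun k => hi k * v k - hi k * y k)) by (intros; cbv beta; unfold dotp; ring).
      rewrite sumR_minus. unfold dotp in Hy. rewrite Hy. auto. }
    rewrite <- Hw.
    assert (Hcs : (dotp m hi w) ^ 2 <= dotp m w w).
    { set (t := dotp m hi w).
      pose proof (dotp_nonneg m (fun k => w k - t * hi k)) as H0.
      unfold dotp in H0.
      rewrite (sumR_ext m _ (fun k => w k * w k + (-2 * t) * (hi k * w k) + t^2 * (hi k * hi k))) in H0 by (intros; cbv beta; unfold dotp; ring).
      rewrite !sumR_plus, !sumR_scal in H0. fold (dotp m w w) (dotp m hi w) (dotp m hi hi) in H0.
      rewrite Hhh in H0. fold t in H0. nra. }
    unfold vnorm. rewrite <- sqrt_Rsqr_abs. apply sqrt_le_1_alt. unfold Rsqr. lra.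
  - intros b Hb. apply Hb. set (c := dotp m hi v - zi).
    exists (fun k => v k - c * hi k). split.
    + unfold hyperplane, dotp.
      rewrite (sumR_ext m _ (fun k => hi k * v k - c * (hi k * hi k))) by (intros; cbv beta; ring).
      rewrite sumR_minus, sumR_scal. fold (dotp m hi v) (dotp m hi hi). rewrite Hhh. unfold c. ring.
    + unfold vnorm, dotp.
      rewrite (sumR_ext m _ (fun k => c^2 * (hi k * hi k))) by (intros; cbv beta; ring).
      rewrite sumR_scal. fold (dotp m hi hi). rewrite Hhh, Rmult_1_r.
      rewrite <- sqrt_Rsqr_abs. unfold Rsqr. f_equal. ring. }
unfold dist_hyp. fold S.
apply (glb_unique S). 2: exact Hg.
apply epsilon_spec. exists (Rabs (dotp m hi v - zi)). exact Hg.
Qed.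

Lemma deriv_quad A B C : derivable_pt_lim (fun t => A + t * B + t ^ 2 * C) 0 B.
Proof.
intros eps Heps.
assert (Hd : 0 < eps / (Rabs C + 1)).
{ apply Rdiv_lt_0_compat; auto. pose proof (Rabs_pos C); lra. }
exists (mkposreal _ Hd). intros hh Hh Hlt. simpl in Hlt.
replace ((A + (0 + hh) * B + (0 + hh) ^ 2 * C - (A + 0 * B + 0 ^ 2 * C)) / hh - B) with (hh * C)
  by (field; auto).
rewrite Rabs_mult.
assert (Hc : 0 <= Rabs C) by apply Rabs_pos.
pose proof (Rabs_pos hh). apply Rle_lt_trans with (Rabs hh * (Rabs C + 1)). nra.
apply Rlt_le_trans with (eps / (Rabs C + 1) * (Rabs C + 1)).
apply Rmult_lt_compat_r; lra. right; field; lra.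
Qed.

Definition alpha m (h : nat -> nat -> R) (z : nat -> R) (x : nat -> nat -> R) i :=
  dotp m (h i) (x i) - z i.

Definition dd m (x v : nat -> nat -> R) i j :=
  dotp m (fun k => x j k - x i k) (fun k => v j k - v i k).

Definition F N m h z (a : nat -> nat -> R) K x :=
  / 2 * sumR N (fun i => (alpha m h z x i) ^ 2)
  + K / 4 * sumR N (fun i => sumR N (fun j => a i j * dd m x x i j)).

Definition lin1 N m h z (a : nat -> nat -> R) K x v :=
  sumR N (fun i => alpha m h z x i * dotp m (h i) (v i))
  + K / 2 * sumR N (fun i => sumR N (fun j => a i j * dd m x v i j)).

Definition quad2 N m (h : nat -> nat -> R) (a : nat -> nat -> R) K v :=
  / 2 * sumR N (fun i => (dotp m (h i) (v i)) ^ 2)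
  + K / 4 * sumR N (fun i => sumR N (fun j => a i j * dd m v v i j)).

Lemma half_sum N (s : nat -> nat -> R) : (forall i j, s i j = s j i) -> (forall i, s i i = 0) ->
  sumR N (fun i => sumR N (fun j => if (i <? j)%nat then s i j else 0)) =
  / 2 * sumR N (fun i => sumR N (fun j => s i j)).
Proof.
intros Hs H0.
assert (E : sumR N (fun i => sumR N (fun j => s i j)) =
  sumR N (fun i => sumR N (fun j => if (i <? j)%nat then s i j else 0)) +
  sumR N (fun i => sumR N (fun j => if (j <? i)%nat then s j i else 0))).
{ rewrite <- sumR_plus. apply sumR_ext. intros i _. rewrite <- sumR_plus. apply sumR_ext. intros j _.
  destruct (Nat.ltb_spec i j); destruct (Nat.ltb_spec j i); try lia.
  - ring.
  - rewrite Hs; ring.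
  - assert (i = j) by lia. subst. rewrite H0. ring. }
rewrite E. rewrite (sumR_swap N N (fun i j => if (j <? i)%nat then s j i else 0)). simpl. field.
Qed.

Lemma DK_eq N m h z a K x : (forall i, (i < N)%nat -> vnorm m (h i) = 1) ->
  (forall i j, a i j = a j i) ->
  DK N m h z a K x = F N m h z a K x.
Proof.
intros Hu Hs. unfold DK, F. f_equal.
- f_equal. apply sumR_ext. intros i Hi. rewrite dist_hyp_eq by auto.
  unfold alpha. rewrite pow2_abs. auto.
- rewrite (sumR_ext N _ (fun i => sumR N (fun j => if (i <? j)%nat then a i j * dd m x x i j else 0))).
  + rewrite half_sum. field.
    * intros i j. unfold dd. rewrite Hs. unfold dotp. f_equal. apply sumR_ext. intros; ring.
    * intros i. unfold dd, dotp. rewrite (sumR_ext m _ (fun _ => 0)). rewrite sumR_0. ring.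
      intros; ring.
  + intros i _. apply sumR_ext. intros j _. destruct (i <? j)%nat; auto.
    unfold dd. rewrite vnorm_sq. auto.
Qed.

Lemma dotp_lin_r m u p q t : dotp m u (fun k => p k + t * q k) = dotp m u p + t * dotp m u q.
Proof. unfold dotp. rewrite <- sumR_scal, <- sumR_plus. apply sumR_ext. intros; ring. Qed.

Lemma dd_quad m x v t i j :
  dd m (fun i k => x i k + t * v i k) (fun i k => x i k + t * v i k) i j =
  dd m x x i j + t * (2 * dd m x v i j) + t ^ 2 * dd m v v i j.
Proof.
unfold dd, dotp. rewrite <- !sumR_scal. rewrite (sumR_quad m t _ (fun k => (x j k - x i k) * (x j k - x i k))
  (fun k => 2 * ((x j k - x i k) * (v j k - v i k))) (fun k => (v j k - v i k) * (v j k - v i k))).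
rewrite !sumR_scal. auto. intros; ring.
Qed.

Lemma F_expand N m h z a K x v t :
  F N m h z a K (fun i k => x i k + t * v i k) = F N m h z a K x + t * lin1 N m h z a K x v + t ^ 2 * quad2 N m h a K v.
Proof.
unfold F, lin1, quad2.
rewrite (sumR_quad N t _ (fun i => (alpha m h z x i) ^ 2) (fun i => 2 * (alpha m h z x i * dotp m (h i) (v i)))
   (fun i => (dotp m (h i) (v i)) ^ 2)).
2:{ intros i _. unfold alpha. rewrite dotp_lin_r. ring. }
rewrite (sumR_quad N t (fun i => sumR N (fun j => a i j * dd m (fun i k => x i k + t * v i k) (fun i k => x i k + t * v i k) i j)) (fun i => sumR N (fun j => a i j * dd m x x i j))
   (fun i => 2 * sumR N (fun j => a i j * dd m x v i j)) (fun i => sumR N (fun j => a i j * dd m v v i j))).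
2:{ intros i _. rewrite <- sumR_scal.
    apply sumR_quad. intros j _. rewrite dd_quad. ring. }
rewrite !sumR_scal. field.
Qed.

Lemma grad_iff N m h z a K x : (forall i, (i < N)%nat -> vnorm m (h i) = 1) ->
  (forall i j, a i j = a j i) ->
  (grad_zero N m h z a K x <-> forall v, lin1 N m h z a K x v = 0).
Proof.
intros Hu Hs.
assert (Hd : forall v, derivable_pt_lim (fun t => DK N m h z a K (fun i k => x i k + t * v i k)) 0 (lin1 N m h z a K x v)).
{ intros v. replace (fun t => DK N m h z a K (fun i k => x i k + t * v i k)) with
    (fun t => F N m h z a K x + t * lin1 N m h z a K x v + t ^ 2 * quad2 N m h a K v).
  apply deriv_quad. apply functional_extensionality. intros t.
  rewrite DK_eq by auto. rewrite F_expand. auto. }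
split.
- intros Hg v. eapply uniqueness_limite. apply Hd. apply Hg.
- intros Hc v. pose proof (Hd v) as H. rewrite Hc in H. exact H.
Qed.

Lemma F_at N m h z a K x y : lin1 N m h z a K x (fun i k => y i k - x i k) = 0 ->
  F N m h z a K y = F N m h z a K x + quad2 N m h a K (fun i k => y i k - x i k).
Proof.
intros H.
replace y with (fun i k => x i k + 1 * (y i k - x i k)) at 1.
rewrite F_expand, H. ring.
apply functional_extensionality; intro i; apply functional_extensionality; intro k. ring.
Qed.

Lemma dd_nonneg m v i j : 0 <= dd m v v i j.
Proof. apply dotp_nonneg. Qed.

Lemma c2_parts_nonneg N m h a K v : 0 <= K -> (forall i j, 0 <= a i j) ->
  0 <= sumR N (fun i => (dotp m (h i) (v i)) ^ 2) /\
  0 <= K / 4 * sumR N (fun i => sumR N (fun j => a i j * dd m v v i j)).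
Proof.
intros HK Ha. split.
- apply sumR_nonneg. intros. apply pow2_ge_0.
- apply Rmult_le_pos. lra. apply sumR_nonneg. intros. apply sumR_nonneg. intros.
  apply Rmult_le_pos; auto. apply dd_nonneg.
Qed.

Lemma c2_nonneg N m h a K v : 0 <= K -> (forall i j, 0 <= a i j) -> 0 <= quad2 N m h a K v.
Proof.
intros HK Ha. destruct (c2_parts_nonneg N m h a K v HK Ha). unfold quad2. lra.
Qed.

Lemma c2_zero N m h a K v : 0 < K -> (forall i j, 0 <= a i j) -> quad2 N m h a K v = 0 ->
  (forall i, (i < N)%nat -> dotp m (h i) (v i) = 0) /\
  (forall i j, (i < N)%nat -> (j < N)%nat -> a i j * dd m v v i j = 0).
Proof.
intros HK Ha H. destruct (c2_parts_nonneg N m h a K v ltac:(lra) Ha) as [H1 H2].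
unfold quad2 in H.
assert (E1 : sumR N (fun i => (dotp m (h i) (v i)) ^ 2) = 0) by lra.
assert (E2 : sumR N (fun i => sumR N (fun j => a i j * dd m v v i j)) = 0).
{ assert (K / 4 * sumR N (fun i => sumR N (fun j => a i j * dd m v v i j)) = 0) by lra.
  apply Rmult_integral in H0. destruct H0; auto. lra. }
split.
- intros i Hi. pose proof (sumR_zero_each _ _ ltac:(intros; apply pow2_ge_0) E1 i Hi). simpl in H0.
  nra.
- intros i j Hi Hj.
  assert (Hn : forall i j, 0 <= a i j * dd m v v i j) by (intros; apply Rmult_le_pos; auto; apply dd_nonneg).
  pose proof (sumR_zero_each N (fun i => sumR N (fun j => a i j * dd m v v i j)) ltac:(intros; apply sumR_nonneg; auto) E2 i Hi). simpl in H0.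
  exact (sumR_zero_each N (fun j => a i j * dd m v v i j) ltac:(intros; apply Hn) H0 j Hj).
Qed.

Lemma edge_eq m w i j : dd m w w i j = 0 -> forall k, (k < m)%nat -> w i k = w j k.
Proof.
intros H k Hk. unfold dd, dotp in H.
pose proof (sumR_zero_each m (fun k => (w j k - w i k) * (w j k - w i k)) ltac:(intros; apply Rle_0_sqr) H k Hk).
simpl in H0. nra.
Qed.

Lemma reach_eq N m (a : nat -> nat -> R) w :
  (forall i j, (i < N)%nat -> (j < N)%nat -> a i j * dd m w w i j = 0) ->
  forall i j, reach N a i j -> (i < N)%nat -> forall k, (k < m)%nat -> w i k = w j k.
Proof.
intros He i j Hr. induction Hr as [i|i j l Hj Ha Hr IH]; intros Hi k Hk; auto.
rewrite <- (IH Hj k Hk). apply (edge_eq m); auto.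
pose proof (He i j Hi Hj). apply Rmult_integral in H. destruct H; auto. lra.
Qed.

Lemma kill N m h a w : rank_full_col N m h -> connected N a ->
  (forall i, (i < N)%nat -> dotp m (h i) (w i) = 0) ->
  (forall i j, (i < N)%nat -> (j < N)%nat -> a i j * dd m w w i j = 0) ->
  forall i k, (i < N)%nat -> (k < m)%nat -> w i k = 0.
Proof.
intros Hr Hc H1 H2 i k Hi Hk.
assert (E : forall i k, (i < N)%nat -> (k < m)%nat -> w i k = w 0%nat k).
{ intros i' k' Hi' Hk'. apply (reach_eq N m a w H2); auto. apply Hc; lia. }
rewrite E by auto. apply Hr; auto.
intros i' Hi'. rewrite <- (H1 i' Hi'). unfold dotp. apply sumR_ext. intros k' Hk'.
rewrite (E i' k'); auto.
Qed.

Lemma reach_bound N m (a : nat -> nat -> R) (P : (nat -> nat -> R) -> Prop) (E : nat -> nat -> R) :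
  (forall x, P x -> forall i j k, (i < N)%nat -> (j < N)%nat -> a i j > 0 -> (k < m)%nat ->
     Rabs (x i k - x j k) <= E i j) ->
  forall i j, reach N a i j -> (i < N)%nat ->
  exists L, forall x, P x -> forall k, (k < m)%nat -> Rabs (x i k - x j k) <= L.
Proof.
intros HE i j Hr. induction Hr as [i|i j l Hj Ha Hr IH]; intros Hi.
- exists 0. intros. replace (x i k - x i k) with 0 by ring. rewrite Rabs_R0. lra.
- destruct (IH Hj) as [L HL]. exists (E i j + L). intros x Hx k Hk.
  replace (x i k - x l k) with ((x i k - x j k) + (x j k - x l k)) by ring.
  eapply Rle_trans. apply Rabs_triang. pose proof (HE x Hx i j k Hi Hj Ha Hk). pose proof (HL x Hx k Hk). lra.
Qed.

Definition g N m h z (a : nat -> nat -> R) K x i k :=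
  alpha m h z x i * h i k + K * sumR N (fun j => a i j * (x i k - x j k)).

Lemma lin1_g N m h z a K x v : (forall i j, a i j = a j i) ->
  lin1 N m h z a K x v = sumR N (fun i => sumR m (fun k => v i k * g N m h z a K x i k)).
Proof.
intros Hs. unfold lin1, g.
set (W := sumR N (fun i => sumR N (fun j => a i j * sumR m (fun k => (x i k - x j k) * v i k)))).
assert (E1 : sumR N (fun i => sumR N (fun j => a i j * dd m x v i j)) = 2 * W).
{ unfold dd, dotp.
  rewrite (sumR_ext N _ (fun i => sumR N (fun j => a i j * sumR m (fun k => (x j k - x i k) * v j k))
                       + sumR N (fun j => a i j * sumR m (fun k => (x i k - x j k) * v i k)))).
  2:{ intros i _. rewrite <- sumR_plus. apply sumR_ext. intros j _. rewrite <- Rmult_plus_distr_l, <- sumR_plus.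
      f_equal. apply sumR_ext. intros; ring. }
  rewrite sumR_plus. fold W.
  rewrite (sumR_swap N N (fun i j => a i j * sumR m (fun k => (x j k - x i k) * v j k))).
  rewrite (sumR_ext N _ (fun i => sumR N (fun j => a i j * sumR m (fun k => (x i k - x j k) * v i k)))).
  fold W. ring.
  intros i _. apply sumR_ext. intros j _. rewrite Hs. auto. }
rewrite E1.
rewrite (sumR_ext N (fun i => sumR m (fun k => v i k * (alpha m h z x i * h i k + K * sumR N (fun j => a i j * (x i k - x j k)))))
   (fun i => alpha m h z x i * dotp m (h i) (v i) + K * sumR N (fun j => a i j * sumR m (fun k => (x i k - x j k) * v i k)))).
- rewrite sumR_plus, sumR_scal. fold W. field.
- intros i _. unfold dotp.
  transitivity (sumR m (fun k => alpha m h z x i * (h i k * v i k)) +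
     sumR m (fun k => K * sumR N (fun j => a i j * ((x i k - x j k) * v i k)))).
  + rewrite <- sumR_plus. apply sumR_ext. intros k _.
    assert (Hq : sumR N (fun j => a i j * ((x i k - x j k) * v i k)) = v i k * sumR N (fun j => a i j * (x i k - x j k))).
    { rewrite <- sumR_scal. apply sumR_ext. intros; ring. }
    rewrite Hq. ring.
  + rewrite !sumR_scal. f_equal. f_equal.
    rewrite (sumR_swap m N (fun k j => a i j * ((x i k - x j k) * v i k))).
    apply sumR_ext. intros j _. rewrite sumR_scal. auto.
Qed.

Module LA.
Import all_boot all_algebra Rstruct.
Import GRing.Theory.
Local Open Scope ring_scope.

Lemma sumR_big n (f : nat -> R) : sumR n f = \sum_(q < n) f q.
Proof.
elim: n => [|n IH] /=; first by rewrite big_ord0.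
by rewrite big_ord_recr /= IH.
Qed.

Lemma flat_surj n (M : nat -> nat -> R) :
  (forall y : nat -> R, (forall p, (p < n)%coq_nat -> sumR n (fun q => Rmult (M p q) (y q)) = R0) ->
      forall q, (q < n)%coq_nat -> y q = R0) ->
  forall b : nat -> R, exists y : nat -> R, forall p, (p < n)%coq_nat ->
      sumR n (fun q => Rmult (M p q) (y q)) = b p.
Proof.
move=> Hinj b.
pose B : 'M[R]_n := \matrix_(q < n, p < n) M p q.
have Hrow : forall u : 'rV[R]_n, u *m B = 0 -> u = 0.
  move=> u Hu; apply/rowP => q.
  pose y := fun q : nat => match (Sumbool.sumbool_of_bool (q < n)%N) with
                      | left H => u ord0 (Ordinal H) | right _ => 0 end.
  have Hy : forall q : 'I_n, y q = u ord0 q.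
    move=> [q' Hq'] /=; rewrite /y; case: Sumbool.sumbool_of_bool => H.
      by congr (u _ _); apply: val_inj.
    by rewrite Hq' in H.
  rewrite mxE -Hy; apply: Hinj; last by apply/ltP.
  move=> p /ltP Hp; rewrite sumR_big.
  transitivity ((u *m B) ord0 (Ordinal Hp)); last by rewrite Hu mxE.
  rewrite mxE; apply: eq_bigr => i _; by rewrite Hy mxE mulrC.
have Hfree : row_free B.
  rewrite -kermx_eq0; apply/eqP/row_matrixP => i; rewrite row0.
  apply: Hrow; by rewrite -row_mul mulmx_ker row0.
have HU : B \in unitmx by rewrite -row_free_unit.
pose bv : 'rV[R]_n := \row_(p < n) b p.
pose u := bv *m invmx B.
exists (fun q => match (Sumbool.sumbool_of_bool (q < n)%N) with
                      | left H => u ord0 (Ordinal H) | right _ => 0 end).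
move=> p /ltP Hp.
transitivity ((u *m B) ord0 (Ordinal Hp)); last by rewrite /u mulmxKV // mxE.
rewrite mxE sumR_big; apply: eq_bigr => [[i Hi]] _.
rewrite !mxE /=; case: Sumbool.sumbool_of_bool => H; last by rewrite Hi in H.
rewrite mulrC (bool_irrelevance H Hi) /u mxE; reflexivity.
Qed.
End LA.

Lemma flat_surj n (M : nat -> nat -> R) :
  (forall y : nat -> R, (forall p, (p < n)%nat -> sumR n (fun q => M p q * y q) = 0) ->
      forall q, (q < n)%nat -> y q = 0) ->
  forall b : nat -> R, exists y : nat -> R, forall p, (p < n)%nat ->
      sumR n (fun q => M p q * y q) = b p.
Proof. exact (LA.flat_surj n M). Qed.

Lemma divmod_pair m j l : (l < m)%nat -> ((j * m + l) / m = j /\ (j * m + l) mod m = l)%nat.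
Proof.
intros Hl. split.
- symmetry. apply (Nat.div_unique _ _ _ l); auto. lia.
- symmetry. apply (Nat.mod_unique _ _ j l); auto. lia.
Qed.

Lemma dbl_surj N m (M : nat -> nat -> nat -> nat -> R) :
  (forall w, (forall i k, (i < N)%nat -> (k < m)%nat ->
       sumR N (fun j => sumR m (fun l => M i k j l * w j l)) = 0) ->
     forall i k, (i < N)%nat -> (k < m)%nat -> w i k = 0) ->
  forall b, exists x, forall i k, (i < N)%nat -> (k < m)%nat ->
     sumR N (fun j => sumR m (fun l => M i k j l * x j l)) = b i k.
Proof.
intros Hinj b.
set (Mf := fun p q => M (p / m)%nat (p mod m)%nat (q / m)%nat (q mod m)%nat).
assert (Key : forall y p, sumR (N * m) (fun q => Mf p q * y q) =
   sumR N (fun j => sumR m (fun l => M (p / m)%nat (p mod m)%nat j l * y (j * m + l)%nat))).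
{ intros y p. rewrite sumR_mul. apply sumR_ext. intros j _. apply sumR_ext. intros l Hl.
  unfold Mf. destruct (divmod_pair m j l Hl) as [-> ->]. auto. }
assert (Hp : forall i k, (i < N)%nat -> (k < m)%nat -> ((i * m + k) < N * m /\ (i * m + k) / m = i /\ (i * m + k) mod m = k)%nat).
{ intros i k Hi Hk. destruct (divmod_pair m i k Hk). split; auto. nia. }
destruct (flat_surj (N * m) Mf) with (b := fun p => b (p / m)%nat (p mod m)%nat) as [y Hy].
- intros y Hy q Hq.
  assert (Hm : m <> 0%nat) by (intro; subst; lia).
  pose proof (Nat.div_mod q m Hm) as Eq.
  assert (Hqm : (q / m < N)%nat) by (apply Nat.Div0.div_lt_upper_bound; lia).
  pose proof (Nat.mod_upper_bound q m Hm).
  rewrite Eq. replace (m * (q / m) + q mod m)%nat with ((q / m) * m + q mod m)%nat by lia.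
  apply (Hinj (fun j l => y (j * m + l)%nat)); auto.
  intros i k Hi Hk. destruct (Hp i k Hi Hk) as [H1 [H2 H3]].
  rewrite <- (Hy (i * m + k)%nat) by lia. rewrite Key, H2, H3. auto.
- exists (fun j l => y (j * m + l)%nat). intros i k Hi Hk.
  destruct (Hp i k Hi Hk) as [H1 [H2 H3]].
  pose proof (Hy (i * m + k)%nat ltac:(lia)) as E. rewrite Key, H2, H3 in E. exact E.
Qed.

Lemma sumR_scal_r n f c : sumR n (fun i => f i * c) = sumR n f * c.
Proof. rewrite Rmult_comm, <- sumR_scal. apply sumR_ext. intros; ring. Qed.

Lemma Gy_eq N m (h : nat -> nat -> R) y l :
  sumR m (fun l' => sumR N (fun i => h i l * h i l') * y l') = sumR N (fun i => h i l * dotp m (h i) y).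
Proof.
rewrite (sumR_ext m _ (fun l' => sumR N (fun i => h i l * (h i l' * y l')))).
2:{ intros. rewrite <- sumR_scal_r. apply sumR_ext. intros; ring. }
rewrite sumR_swap. apply sumR_ext. intros i _. unfold dotp. rewrite sumR_scal. auto.
Qed.

Lemma yS_eq N m (h : nat -> nat -> R) y u :
  sumR m (fun l => y l * sumR N (fun i => h i l * dotp m (h i) u)) =
  sumR N (fun i => dotp m (h i) u * dotp m (h i) y).
Proof.
rewrite (sumR_ext m _ (fun l => sumR N (fun i => y l * (h i l * dotp m (h i) u)))).
2:{ intros. rewrite sumR_scal. auto. }
rewrite sumR_swap. apply sumR_ext. intros i _. change (dotp m (h i) y) with (sumR m (fun l => h i l * y l)). rewrite <- sumR_scal.
apply sumR_ext. intros; ring.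
Qed.

Lemma inv_bound N m h : rank_full_col N m h -> forall C, 0 <= C ->
  exists c, forall y, (forall i, (i < N)%nat -> Rabs (dotp m (h i) y) <= C) ->
    forall k, (k < m)%nat -> Rabs (y k) <= c.
Proof.
intros Hr C HC.
set (G := fun l l' => sumR N (fun i => h i l * h i l')).
assert (Hs : forall b, exists u, forall l, (l < m)%nat -> sumR m (fun l' => G l l' * u l') = b l).
{ apply flat_surj. intros y Hy q Hq. apply Hr; auto.
  assert (E : sumR N (fun i => dotp m (h i) y * dotp m (h i) y) = 0).
  { rewrite <- yS_eq. rewrite (sumR_ext m _ (fun _ => 0)). apply sumR_0.
    intros l Hl. rewrite <- Gy_eq. unfold G in Hy. rewrite Hy by auto. ring. }
  intros i Hi. pose proof (sumR_zero_each N _ ltac:(intros; apply Rle_0_sqr) E i Hi). cbv beta in H. apply Rmult_integral in H. destruct H; auto. }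
destruct (max_exists m (fun k c => forall y, (forall i, (i < N)%nat -> Rabs (dotp m (h i) y) <= C) -> Rabs (y k) <= c)) as [c Hc].
3:{ exists c. intros y Hy k Hk. apply Hc; auto. }
- intros k L L' H HL y Hy. eapply Rle_trans; [apply H; auto| auto].
- intros k Hk. destruct (Hs (fun l => if Nat.eqb l k then 1 else 0)) as [u Hu].
  exists (sumR N (fun i => Rabs (dotp m (h i) u) * C)). intros y Hy.
  assert (E : y k = sumR N (fun i => dotp m (h i) u * dotp m (h i) y)).
  { rewrite <- yS_eq. rewrite <- (sumR_delta m k y Hk). apply sumR_ext. intros l Hl.
    rewrite <- Gy_eq. unfold G in Hu. rewrite Hu by auto. destruct (Nat.eqb l k); ring. }
  rewrite E. eapply Rle_trans. apply sumR_abs. apply sumR_le. intros i Hi.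
  rewrite Rabs_mult. apply Rmult_le_compat_l. apply Rabs_pos. auto.
Qed.

Lemma abs_le_sqrt u c : u ^ 2 <= c -> Rabs u <= sqrt c.
Proof. intros H. rewrite <- sqrt_Rsqr_abs. apply sqrt_le_1_alt. unfold Rsqr. nra. Qed.

Definition Mx N (h : nat -> nat -> R) (a : nat -> nat -> R) K i k j l :=
  (if Nat.eqb j i then h i k * h i l else 0) +
  (if Nat.eqb l k then K * ((if Nat.eqb j i then sumR N (fun j' => a i j') else 0) - a i j) else 0).

Lemma Mx_apply N m h a K x i k : (i < N)%nat -> (k < m)%nat ->
  sumR N (fun j => sumR m (fun l => Mx N h a K i k j l * x j l)) =
  g N m h (fun _ => 0) a K x i k.
Proof.
intros Hi Hk. unfold Mx, g, alpha.
rewrite (sumR_ext N _ (fun j => (if Nat.eqb j i then sumR m (fun l => h i k * h i l * x j l) else 0)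
    + (if Nat.eqb j i then K * sumR N (fun j' => a i j') * x j k else 0) - K * a i j * x j k)).
2:{ intros j Hj. rewrite (sumR_ext m _ (fun l => (if Nat.eqb j i then h i k * h i l * x j l else 0) +
         (if Nat.eqb l k then K * ((if Nat.eqb j i then sumR N (fun j' => a i j') else 0) - a i j) * x j l else 0))).
    2:{ intros l _. destruct (Nat.eqb j i); destruct (Nat.eqb l k); ring. }
    rewrite sumR_plus. rewrite (sumR_delta m k (fun l => K * ((if Nat.eqb j i then sumR N (fun j' => a i j') else 0) - a i j) * x j l) Hk).
    destruct (Nat.eqb j i).
    - ring.
    - rewrite sumR_0. ring. }
rewrite sumR_minus, sumR_plus.
rewrite (sumR_delta N i (fun j => sumR m (fun l => h i k * h i l * x j l)) Hi).
rewrite (sumR_delta N i (fun j => K * sumR N (fun j' => a i j') * x j k) Hi).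
unfold dotp. rewrite (sumR_ext m _ (fun l => h i k * (h i l * x i l))) by (intros; ring).
rewrite sumR_scal. rewrite <- !sumR_scal.
rewrite (sumR_ext N (fun j => K * (a i j * (x i k - x j k))) (fun j => K * a i j * x i k - K * a i j * x j k)) by (intros; ring).
rewrite sumR_minus. rewrite sumR_scal_r. rewrite (sumR_scal m (h i k) (fun l => h i l * x i l)). ring.
Qed.

Lemma lin1_quad2 N m h a K w :
  lin1 N m h (fun _ => 0) a K w w = 2 * quad2 N m h a K w.
Proof.
unfold lin1, quad2, alpha.
rewrite (sumR_ext N (fun i => (dotp m (h i) (w i) - 0) * dotp m (h i) (w i)) (fun i => dotp m (h i) (w i) ^ 2)) by (intros; ring).
field.
Qed.

Lemma F_zero N m h z a K : F N m h z a K (fun _ _ => 0) = / 2 * sumR N (fun i => z i ^ 2).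
Proof.
unfold F, alpha, dd, dotp.
rewrite (sumR_ext N (fun i => (sumR m (fun k => h i k * 0) - z i) ^ 2) (fun i => z i ^ 2)).
2:{ intros. rewrite (sumR_ext m _ (fun _ => 0)) by (intros; cbv beta; ring). rewrite sumR_0. ring. }
rewrite (sumR_ext N (fun i => sumR N (fun j => a i j * sumR m (fun k => (0 - 0) * (0 - 0)))) (fun _ => 0)).
rewrite sumR_0. ring.
intros. rewrite (sumR_ext N _ (fun _ => 0)). apply sumR_0.
intros. rewrite (sumR_ext m _ (fun _ => 0)) by (intros; cbv beta; ring). rewrite sumR_0. ring.
Qed.

Theorem mainTheorem12
  (N m : nat) (h : nat -> nat -> R) (z : nat -> R) (a : nat -> nat -> R)
  (Hunit : forall i, (i < N)%nat -> vnorm m (h i) = 1)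
  (Hrank : rank_full_col N m h)
  (Hsym : forall i j, a i j = a j i)
  (Hnonneg : forall i j, 0 <= a i j)
  (Hconn : connected N a) :
  (forall K, 0 < K ->
     (exists x, grad_zero N m h z a K x) /\
     (forall x y, grad_zero N m h z a K x -> grad_zero N m h z a K y ->
        forall i k, (i < N)%nat -> (k < m)%nat -> x i k = y i k))
  /\
  (forall kappa0, 0 < kappa0 ->
     exists B, forall K x, kappa0 < K -> grad_zero N m h z a K x ->
       forall i k, (i < N)%nat -> (k < m)%nat -> Rabs (x i k) <= B).
Proof.
assert (Hmin : forall K x y, 0 <= K -> grad_zero N m h z a K x -> F N m h z a K x <= F N m h z a K y).
{ intros K x y HK Hg. pose proof (proj1 (grad_iff N m h z a K x Hunit Hsym) Hg) as Hg1.
  rewrite (F_at N m h z a K x y (Hg1 _)). pose proof (c2_nonneg N m h a K (fun i k => y i k - x i k) HK Hnonneg). lra. }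
split.
- intros K HK. split.
  +
    destruct (dbl_surj N m (Mx N h a K)) with (b := fun i k => z i * h i k) as [x Hx].
    * intros w Hw. apply (kill N m h a w Hrank Hconn).
      -- apply (c2_zero N m h a K w HK Hnonneg).
         assert (E : lin1 N m h (fun _ => 0) a K w w = 0).
         { rewrite lin1_g by auto. rewrite (sumR_ext N _ (fun _ => 0)). apply sumR_0.
           intros i Hi. rewrite (sumR_ext m _ (fun _ => 0)). apply sumR_0.
           intros k Hk. rewrite <- Mx_apply by auto. rewrite Hw by auto. ring. }
         rewrite lin1_quad2 in E. lra.
      -- apply (c2_zero N m h a K w HK Hnonneg).
         assert (E : lin1 N m h (fun _ => 0) a K w w = 0).
         { rewrite lin1_g by auto. rewrite (sumR_ext N _ (fun _ => 0)). apply sumR_0.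
           intros i Hi. rewrite (sumR_ext m _ (fun _ => 0)). apply sumR_0.
           intros k Hk. rewrite <- Mx_apply by auto. rewrite Hw by auto. ring. }
         rewrite lin1_quad2 in E. lra.
    * exists x. apply (grad_iff N m h z a K x Hunit Hsym). intros v. rewrite lin1_g by auto.
      rewrite (sumR_ext N _ (fun _ => 0)). apply sumR_0.
      intros i Hi. rewrite (sumR_ext m _ (fun _ => 0)). apply sumR_0.
      intros k Hk. cbv beta.
      assert (E : g N m h z a K x i k = 0).
      { pose proof (Hx i k Hi Hk) as Hxi. rewrite Mx_apply in Hxi by auto.
        unfold g, alpha in *. lra. }
      rewrite E. ring.
  +
    intros x y Hx Hy i k Hi Hk.
    pose proof (proj1 (grad_iff N m h z a K x Hunit Hsym) Hx (fun i k => y i k - x i k)) as E1.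
    pose proof (proj1 (grad_iff N m h z a K y Hunit Hsym) Hy (fun i k => x i k - y i k)) as E2.
    apply F_at in E1. apply F_at in E2.
    pose proof (c2_nonneg N m h a K (fun i k => y i k - x i k) ltac:(lra) Hnonneg).
    pose proof (c2_nonneg N m h a K (fun i k => x i k - y i k) ltac:(lra) Hnonneg).
    assert (Q : quad2 N m h a K (fun i k => y i k - x i k) = 0) by lra.
    destruct (c2_zero N m h a K _ HK Hnonneg Q) as [Q1 Q2].
    pose proof (kill N m h a _ Hrank Hconn Q1 Q2 i k Hi Hk). simpl in H1. lra.
- intros kappa0 Hk0.
  set (Z := sumR N (fun i => z i ^ 2)).
  assert (HZ : 0 <= Z) by (apply sumR_nonneg; intros; apply pow2_ge_0).
  set (P := fun x => exists K, kappa0 < K /\ grad_zero N m h z a K x).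
  assert (HP1 : forall x, P x -> forall i, (i < N)%nat -> (alpha m h z x i) ^ 2 <= Z).
  { intros x [K [HK Hg]] i Hi.
    pose proof (Hmin K x (fun _ _ => 0) ltac:(lra) Hg) as Hm. rewrite F_zero in Hm. fold Z in Hm.
    unfold F in Hm.
    destruct (c2_parts_nonneg N m (fun _ _ => 0) a K x ltac:(lra) Hnonneg) as [_ H2].
    assert (sumR N (fun i => alpha m h z x i ^ 2) <= Z) by lra.
    eapply Rle_trans; [|exact H]. apply (sumR_term_le N (fun i => alpha m h z x i ^ 2)); auto.
    intros; apply pow2_ge_0. }
  set (E := fun i j => sqrt (2 * Z / (kappa0 * a i j))).
  assert (HP2 : forall x, P x -> forall i j k, (i < N)%nat -> (j < N)%nat -> a i j > 0 -> (k < m)%nat ->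
       Rabs (x i k - x j k) <= E i j).
  { intros x [K [HK Hg]] i j k Hi Hj Ha Hk.
    pose proof (Hmin K x (fun _ _ => 0) ltac:(lra) Hg) as Hm. rewrite F_zero in Hm. fold Z in Hm.
    unfold F in Hm.
    assert (H1 : 0 <= sumR N (fun i => alpha m h z x i ^ 2)) by (apply sumR_nonneg; intros; apply pow2_ge_0).
    assert (Hn : forall i j, 0 <= a i j * dd m x x i j) by (intros; apply Rmult_le_pos; auto; apply dd_nonneg).
    assert (H2 : K / 4 * sumR N (fun i => sumR N (fun j => a i j * dd m x x i j)) <= Z / 2) by lra.
    assert (H3 : a i j * dd m x x i j <= sumR N (fun i => sumR N (fun j => a i j * dd m x x i j))).
    { eapply Rle_trans.
      apply (sumR_term_le N (fun j => a i j * dd m x x i j) j); auto.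
      apply (sumR_term_le N (fun i => sumR N (fun j => a i j * dd m x x i j)) i); auto.
      intros; apply sumR_nonneg; auto. }
    assert (H4 : (x j k - x i k) ^ 2 <= dd m x x i j).
    { unfold dd, dotp. simpl. rewrite Rmult_1_r.
      apply (sumR_term_le m (fun k => (x j k - x i k) * (x j k - x i k)) k); auto.
      intros; apply Rle_0_sqr. }
    assert (H5 : a i j * dd m x x i j <= 2 * Z / kappa0).
    { assert (0 <= sumR N (fun i => sumR N (fun j => a i j * dd m x x i j))) by (apply sumR_nonneg; intros; apply sumR_nonneg; auto).
      apply Rle_trans with (2 * Z / K).
      - apply (Rmult_le_reg_l (K / 4)). apply Rdiv_lt_0_compat; lra.
        replace (K / 4 * (2 * Z / K)) with (Z / 2) by (field; lra). nra.
      - unfold Rdiv. rewrite !Rmult_assoc. apply Rmult_le_compat_l. lra.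
        apply Rmult_le_compat_l. auto. apply Rinv_le_contravar; lra. }
    unfold E. apply abs_le_sqrt.
    replace ((x i k - x j k) ^ 2) with ((x j k - x i k) ^ 2) by ring.
    apply Rle_trans with (dd m x x i j); auto.
    apply (Rmult_le_reg_l (a i j)); auto.
    replace (a i j * (2 * Z / (kappa0 * a i j))) with (2 * Z / kappa0) by (field; lra). auto. }
  destruct (max_exists N (fun i L => forall x, P x -> forall k, (k < m)%nat -> Rabs (x i k - x 0%nat k) <= L)) as [L HL].
  { intros i L L' H HL x Hx k Hk. eapply Rle_trans; [apply H; auto|auto]. }
  { intros i Hi. apply (reach_bound N m a P E HP2 i 0%nat); auto. apply Hconn; lia. }
  set (L' := Rabs L).
  set (Hs := sumR N (fun i => sumR m (fun k => Rabs (h i k)))).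
  assert (HHs : forall i, (i < N)%nat -> sumR m (fun k => Rabs (h i k)) <= Hs).
  { intros i Hi. apply (sumR_term_le N (fun i => sumR m (fun k => Rabs (h i k)))); auto.
    intros; apply sumR_nonneg; intros; apply Rabs_pos. }
  set (C := 2 * sqrt Z + L' * Hs).
  assert (HC : 0 <= C).
  { unfold C. pose proof (sqrt_pos Z). assert (0 <= Hs) by (apply sumR_nonneg; intros; apply sumR_nonneg; intros; apply Rabs_pos).
    pose proof (Rabs_pos L). unfold L'. nra. }
  destruct (inv_bound N m h Hrank C HC) as [c Hc].
  exists (c + L'). intros K x HK Hg i k Hi Hk.
  assert (Px : P x) by (exists K; auto).
  assert (Hxi : forall i k, (i < N)%nat -> (k < m)%nat -> Rabs (x i k - x 0%nat k) <= L').
  { intros. eapply Rle_trans. apply HL; auto. apply Rle_abs. }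
  assert (B0 : Rabs (x 0%nat k) <= c).
  { apply Hc; auto. intros i' Hi'.
    assert (Ed : dotp m (h i') (x 0%nat) = (alpha m h z x i' + z i') - sumR m (fun k => h i' k * (x i' k - x 0%nat k))).
    { unfold alpha, dotp. rewrite (sumR_ext m (fun k => h i' k * (x i' k - x 0%nat k)) (fun k => h i' k * x i' k - h i' k * x 0%nat k)) by (intros; ring). rewrite sumR_minus. ring. }
    rewrite Ed. unfold C.
    eapply Rle_trans. apply Rabs_triang. rewrite Rabs_Ropp.
    apply Rplus_le_compat.
    - eapply Rle_trans. apply Rabs_triang.
      assert (Rabs (alpha m h z x i') <= sqrt Z) by (apply abs_le_sqrt; apply HP1; auto).
      assert (Rabs (z i') <= sqrt Z).
      { apply abs_le_sqrt. apply (sumR_term_le N (fun i => z i ^ 2)); auto. intros; apply pow2_ge_0. }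
      lra.
    - eapply Rle_trans. apply sumR_abs.
      apply Rle_trans with (sumR m (fun k => L' * Rabs (h i' k))).
      + apply sumR_le. intros k' Hk'. rewrite Rabs_mult, Rmult_comm. apply Rmult_le_compat_r.
        apply Rabs_pos. apply Hxi; auto.
      + rewrite sumR_scal. apply Rmult_le_compat_l. apply Rabs_pos. auto. }
  replace (x i k) with (x 0%nat k + (x i k - x 0%nat k)) by ring.
  eapply Rle_trans. apply Rabs_triang. pose proof (Hxi i k Hi Hk). lra.
Qed.
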